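(* There exists a strongly bilevel feasible $w$ that is optimal to the NPP, i.e. there exist $w$ strongly bilevel feasible and $t$ such that $(w,t)$ is an optimal solution of the conjugate bilevel program $\max_{w,t}\{w^\top t: w\ge0,\ t\in\mathbf{T}(w)\}$.
   Context: Single-commodity network pricing setting: $G=(\mathcal{V},\mathcal{A})$ directed graph, arc costs $c\ge0$, nonempty tolled arc set $\mathcal{A}_1\subsetneq\mathcal{A}$, $n=|\mathcal{A}_1|$, $N$ node–arc incidence matrix, single origin $o$ and destination $d$ connected by a toll-free path, $b_o=1$, $b_d=-1$, $b_i=0$ otherwise, $\mathcal{X}=\{x\in\mathbb{R}^{\mathcal{A}}: Nx=b,\ x\ge0\}$, $x_{\mathcal{A}_1}$ the restriction of $x$ to $\mathcal{A}_1$; tolls $t\in\mathbb{R}^n$ are extended by zeros to $\bar t\in\mathbb{R}^{\mathcal{A}}$. Let $f(t)=\min\{c^\top x+t^\top x_{\mathcal{A}_1}: x\in\mathcal{X}\}$ for $t\ge0$, $f(t)=-\infty$ otherwise, and $g(w)=\sup_{t\in\mathbb{R}^n}\{f(t)-t^\top w\}$. A vector $w\ge0$ is strongly bilevel feasible when $\{w\}$ is the projection onto $w$-space of a face of $\operatorname{epi}(g)$ whose affine hull's direction space does not contain $(0,1)$. For $w\ge0$, $\mathbf{T}(w)$ is the set of $t$ that are parts of optimal solutions $(t,y)$ of $\max_{t,y}\{b^\top y-w^\top t: N^\top y-\bar t\le c,\ t\ge0\}$. The NPP here is $\max_{t\ge0,x}\{t^\top x_{\mathcal{A}_1}: x\in\arg\min_{x'\in\mathcal{X}}(c^\top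 x'+t^\top x'_{\mathcal{A}_1})\}$, whose optimal value equals that of the conjugate bilevel program. *)

(* Defs.v *)
From HB Require Import structures.
From mathcomp Require Import all_boot all_order all_algebra.
From mathcomp Require Import boolp classical_sets reals constructive_ereal ereal.

Set Implicit Arguments.
Unset Strict Implicit.
Unset Printing Implicit Defensive.

Import Order.TTheory GRing.Theory Num.Theory.
Local Open Scope ring_scope.
Local Open Scope classical_set_scope.

Section NPP.
Context {R : realType} {V A : finType} (tail head : A -> V) (c : A -> R)
  (A1 : {set A}) (o d : V).

(* index type of the tolled arcs A_1 (so R^n with n = |A_1| is tarc -> R) *)
Definition tarc := {a : A | a \in A1}.

(* node-arc incidence matrix: +1 at the tail, -1 at the head of an arc *)
Definition inc (v : V) (a : A) : R := (tail a == v)%:R - (head a == v)%:R.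

Definition bvec (v : V) : R := (v == o)%:R - (v == d)%:R.

Definition flowX : set (A -> R) :=
  [set x | (forall v, \sum_(a : A) inc v a * x a = bvec v) /\ (forall a, 0 <= x a)].

Definition restr (x : A -> R) : tarc -> R := fun i => x (val i).

Definition ext (t : tarc -> R) : A -> R := fun a => oapp t 0 (insub a).

Definition dotT (u v : tarc -> R) : R := \sum_(i : tarc) u i * v i.

Definition f_val (t : tarc -> R) : \bar R :=
  if `[< forall i, 0 <= t i >] then
    ereal_inf [set ((\sum_(a : A) c a * x a) + dotT t (restr x))%:E | x in flowX]
  else -oo%E.

Definition g_val (w : tarc -> R) : \bar R :=
  ereal_sup [set (f_val t - (dotT t w)%:E)%E | t in [set: tarc -> R]].

Definition pt := ((tarc -> R) * R)%type.

Definition epi_g : set pt := [set p | (g_val p.1 <= p.2%:E)%E].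

Definition comb (l : R) (p q : pt) : pt :=
  (fun i => l * p.1 i + (1 - l) * q.1 i, l * p.2 + (1 - l) * q.2).

Definition is_face (C F : set pt) : Prop :=
  F `<=` C /\
  (forall p q l, F p -> F q -> 0 <= l <= 1 -> F (comb l p q)) /\
  (forall p q l, C p -> C q -> 0 < l < 1 -> F (comb l p q) -> F p /\ F q).

Definition aff (F : set pt) : set pt :=
  [set z | exists (m : nat) (p : 'I_m -> pt) (lam : 'I_m -> R),
     (forall k, F (p k)) /\ \sum_(k < m) lam k = 1 /\
     z = (fun i => \sum_(k < m) lam k * (p k).1 i, \sum_(k < m) lam k * (p k).2)].

Definition dir_aff (F : set pt) : set pt :=
  [set z | exists u v, aff F u /\ aff F v /\
     z = (fun i => u.1 i - v.1 i, u.2 - v.2)].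

Definition e_last : pt := (fun _ => 0, 1).

Definition proj_w (F : set pt) : set (tarc -> R) := [set w | exists r, F (w, r)].

Definition strongly_bilevel_feasible (w : tarc -> R) : Prop :=
  (forall i, 0 <= w i) /\
  exists F : set pt, is_face epi_g F /\ proj_w F = [set w] /\ ~ dir_aff F e_last.

Definition lp_feas (t : tarc -> R) (y : V -> R) : Prop :=
  (forall i, 0 <= t i) /\
  (forall a, \sum_(v : V) inc v a * y v - ext t a <= c a).

Definition lp_obj (w t : tarc -> R) (y : V -> R) : R :=
  \sum_(v : V) bvec v * y v - dotT w t.

Definition Tset (w : tarc -> R) : set (tarc -> R) :=
  [set t | exists y, lp_feas t y /\
     forall t' y', lp_feas t' y' -> lp_obj w t' y' <= lp_obj w t y].

Definition cbp_optimal (w t : tarc -> R) : Prop :=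
  (forall i, 0 <= w i) /\ Tset w t /\
  forall w' t', (forall i, 0 <= w' i) -> Tset w' t' -> dotT w' t' <= dotT w t.

Fixpoint walk (u : V) (s : seq A) (v : V) : Prop :=
  match s with
  | [::] => u = v
  | a :: s' => tail a = u /\ walk (head a) s' v
  end.

Definition toll_free_path : Prop :=
  exists s : seq A, walk o s d /\ all (fun a => a \notin A1) s.

End NPP.

(* Main.v *)
Require Import Defs.
From HB Require Import structures.
From mathcomp Require Import all_boot all_order all_algebra.
From mathcomp Require Import boolp classical_sets reals constructive_ereal ereal.
From mathcomp Require Import ring lra.
Import Order.TTheory GRing.Theory Num.Theory.
Set Implicit Arguments.
Unset Strict Implicit.
Unset Printing Implicit Defensive.
Section Walks.
Variables (V E : finType) (tl hd : E -> V).
Local Notation wk := (@walk V E tl hd).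

Lemma walk_catI u m v s1 s2 : wk u s1 m -> wk m s2 v -> wk u (s1 ++ s2) v.
Proof. by elim: s1 u => [|a s IH] u /= => [->|[-> H1] H2] //; split=> //; apply: IH. Qed.

Lemma walk_split u v s1 s2 : wk u (s1 ++ s2) v -> exists m, wk u s1 m /\ wk m s2 v.
Proof.
elim: s1 u => [|a s IH] u /=; first by move=> H; exists u.
by move=> [Ha /IH [m [H1 H2]]]; exists m.
Qed.

Lemma walk_node_split u v s x : wk u s v -> x \in u :: map hd s ->
  exists p q pre, [/\ s = p ++ q, wk u p x, wk x q v & u :: map hd s = pre ++ x :: map hd q].
Proof.
elim: s u => [|a s IH] u /=.
  by move=> -> ; rewrite inE => /eqP ->; exists [::], [::], [::].
move=> [Ha Hw]; rewrite inE => /orP [/eqP ->|Hx].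
  by exists [::], (a :: s), [::]; split.
have [p [q [pre [-> Hp Hq Hn]]]] := IH _ Hw Hx.
exists (a :: p), q, (u :: pre); split.
- by [].
- by split.
- by [].
- by rewrite /= Hn.
Qed.

Fixpoint walkb (u : V) (s : seq E) (v : V) : bool :=
  match s with [::] => u == v | a :: s' => (tl a == u) && walkb (hd a) s' v end.

Lemma walkP u s v : wk u s v <-> walkb u s v.
Proof.
elim: s u => [|a s IH] u /=; first by split=> [->|/eqP].
split=> [[-> /IH H]|/andP [/eqP -> /IH H]]; by [rewrite eqxx H | ].
Qed.

Fixpoint allseq (n : nat) : seq (seq E) :=
  if n is n'.+1 then [::] :: [seq x :: s | x <- enum E, s <- allseq n'] else [:: [::]].

Lemma allseqP n s : (size s <= n)%N -> s \in allseq n.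
Proof.
elim: n s => [|n IH] [|x s] //=; rewrite ?inE ?eqxx //.
move=> Hs; apply/orP; right.
by apply: (allpairs_f (fun x s => x :: s)); [rewrite mem_enum | apply: IH].
Qed.

Lemma uniq_size u s : uniq (u :: map hd s) -> (size s < #|V|)%N.
Proof.
move=> /card_uniqP H; have := max_card (mem (u :: map hd s)).
by rewrite H /= size_map.
Qed.

Variable R : realType.
Local Open Scope ring_scope.

Lemma tele (y : V -> R) u s v : wk u s v -> \sum_(e <- s) (y (tl e) - y (hd e)) = y u - y v.
Proof.
elim: s u => [|a s IH] u /=; first by move=> ->; rewrite big_nil subrr.
by move=> [<- /IH H]; rewrite big_cons H addrA subrK.
Qed.

Lemma feas_le (l : E -> R) (y : V -> R) u s v :
  (forall e, y (tl e) - y (hd e) <= l e) -> wk u s v -> y u - y v <= \sum_(e <- s) l e.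
Proof. by move=> Hf Hw; rewrite -(tele y Hw); apply: ler_sum => e _. Qed.

Lemma shorten u s v : wk u s v -> exists s', [/\ wk u s' v, uniq (u :: map hd s'),
  {subset s' <= s} &
  forall F : E -> R, (forall x r, wk x r x -> 0 <= \sum_(e <- r) F e) ->
     \sum_(e <- s') F e <= \sum_(e <- s) F e].
Proof.
elim: s u => [|a s IH] u /=.
  by move=> ->; exists [::]; split=> //.
move=> [Ha /IH [s0 [Hw Hu Hsub HF]]].
case Hin: (u \in hd a :: map hd s0).
  have [p [q [pre [E1 Hp Hq Hn]]]] := walk_node_split Hw Hin.
  exists q; split=> //.
  - by move: Hu; rewrite Hn cat_uniq => /and3P [_ _].
  - by move=> e He; rewrite inE; apply/orP; right; apply: Hsub; rewrite E1 mem_cat He orbT.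
  - move=> F HF0; rewrite big_cons; apply: (le_trans _ (lerD (lexx (F a)) (HF F HF0))).
    rewrite E1 big_cat addrA lerDr.
    by have := HF0 u (a :: p); rewrite big_cons; apply; split.
exists (a :: s0); split=> //=.
- by rewrite Hin.
- by move=> e; rewrite !inE => /orP [->|/Hsub ->]; rewrite ?orbT.
- by move=> F HF0; rewrite !big_cons lerD2l; apply: HF.
Qed.

End Walks.
Section SP.
Variables (V E : finType) (tl hd : E -> V) (R : realType).
Local Open Scope ring_scope.
Local Notation wk := (@walk V E tl hd).

Lemma list_argmin (T : eqType) (s : seq T) (F : T -> R) : s != [::] ->
  exists2 x, x \in s & forall y, y \in s -> F x <= F y.
Proof.
elim: s => [|a s IH] // _.
case: (eqVneq s [::]) => [->|/IH [x Hx Hm]].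
  by exists a; rewrite ?inE // => y; rewrite inE => /eqP ->.
case: (leP (F a) (F x)) => H.
  exists a; rewrite ?inE ?eqxx // => y; rewrite inE => /orP [/eqP ->//|/Hm]; exact: le_trans.
exists x; first by rewrite inE Hx orbT.
by move=> y; rewrite inE => /orP [/eqP ->|/Hm //]; apply: ltW.
Qed.

Variables (l : E -> R) (pi : V -> R).
Hypothesis Hpi : forall e, pi (tl e) - pi (hd e) <= l e.
Variable d : V.

Lemma closed_nonneg x r : wk x r x -> 0 <= \sum_(e <- r) l e.
Proof. by move=> H; have := feas_le Hpi H; rewrite subrr. Qed.

Lemma minwalk v s0 : wk v s0 d -> exists W, [/\ wk v W d, uniq (v :: map hd W) &
  forall W', wk v W' d -> \sum_(e <- W) l e <= \sum_(e <- W') l e].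
Proof.
move=> H0.
pose L := [seq s <- allseq E #|V| | walkb tl hd v s d && uniq (v :: map hd s)].
have inL s : wk v s d -> uniq (v :: map hd s) -> s \in L.
  move=> /walkP Hw Hu; rewrite mem_filter Hw Hu /=; apply: allseqP.
  exact: ltnW (uniq_size Hu).
have [s1 [Hs1 Hu1 _ _]] := shorten R H0.
have LN : L != [::].
  by apply/eqP => HL; have := inL _ Hs1 Hu1; rewrite HL.
have [W HW Hm] := @list_argmin _ L (fun s => \sum_(e <- s) l e) LN.
move: HW; rewrite mem_filter => /andP [/andP [/walkP HW HuW] _].
exists W; split=> // W' HW'.
have [s2 [Hs2 Hu2 _ HF]] := shorten R HW'.
apply: le_trans (Hm _ (inL _ Hs2 Hu2)) _; apply: HF => x r; exact: closed_nonneg.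
Qed.

Definition Mb := \sum_(e : E) `|l e|.

Lemma le_Mb e : `|l e| <= Mb.
Proof. by rewrite /Mb (bigD1 e) //= lerDl sumr_ge0. Qed.

Lemma sum_le_size (W : seq E) : \sum_(e <- W) l e <= (size W)%:R * Mb.
Proof.
elim: W => [|a W IH]; first by rewrite big_nil mul0r.
rewrite big_cons /= -addn1 natrD mulrDl mul1r addrC lerD //.
exact: le_trans (ler_norm _) (le_Mb a).
Qed.

Lemma sp_dual o s0 : wk o s0 d -> exists (y : V -> R) W,
  [/\ forall e, y (tl e) - y (hd e) <= l e, wk o W d, uniq (o :: map hd W) &
      y o - y d = \sum_(e <- W) l e].
Proof.
move=> H0.
pose BIG := (#|V|%:R * Mb + Mb + \sum_(v : V) `|pi v|).
have Hch : forall v, exists r : R,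
  ((exists s, wk v s d) -> exists W, [/\ wk v W d, uniq (v :: map hd W),
     (forall W', wk v W' d -> \sum_(e <- W) l e <= \sum_(e <- W') l e) &
     r = \sum_(e <- W) l e]) /\
  (~ (exists s, wk v s d) -> r = pi v + BIG).
  move=> v; case: (pselect (exists s, wk v s d)) => [[s Hs]|Hn].
    have [W [HW HU HM]] := minwalk Hs.
    exists (\sum_(e <- W) l e); split; first by move=> _; exists W.
    by move=> H; exfalso; apply: H; exists s.
  by exists (pi v + BIG); split=> // H; exfalso; apply: Hn.
have [y Hy] := choice Hch.
have yd : y d = 0.
  have [/(_ (ex_intro _ [::] erefl)) [W [HW _ HM ->]] _] := Hy d.
  apply/eqP; rewrite eq_le; apply/andP; split.
    by have := HM [::] erefl; rewrite big_nil.
  exact: closed_nonneg HW.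
have ybound u : (exists s, wk u s d) -> y u <= #|V|%:R * Mb.
  move=> Hr; have [/(_ Hr) [W [HW HU HM ->]] _] := Hy u.
  apply: le_trans (sum_le_size W) _; rewrite ler_wpM2r ?ler_nat ?(ltnW (uniq_size HU)) //.
  by rewrite /Mb sumr_ge0.
have [/(_ (ex_intro _ s0 H0)) [W [HW HU HM Ho]] _] := Hy o.
exists y, W; split=> //; last by rewrite yd subr0.
move=> e.
case: (pselect (exists s, wk (hd e) s d)) => [[s Hs]|Hn].
  have Hu : wk (tl e) (e :: s) d by [].
  have [/(_ (ex_intro (fun s => wk (tl e) s d) _ Hu)) [Wu [HWu _ HMu ->]] _] := Hy (tl e).
  have [/(_ (ex_intro (fun s => wk (hd e) s d) _ Hs)) [Wv [HWv _ HMv ->]] _] := Hy (hd e).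
  have Hu' : wk (tl e) (e :: Wv) d by [].
  by have := HMu _ Hu'; rewrite big_cons lerBlDr addrC.
have [_ /(_ Hn) ->] := Hy (hd e).
case: (pselect (exists s, wk (tl e) s d)) => [Hr|Hn'].
  have := ybound _ Hr.
  have h1 : - pi (hd e) <= \sum_(v : V) `|pi v|.
    rewrite (bigD1 (hd e)) //=; have := ler_norm (- pi (hd e)); rewrite normrN => h.
    by apply: le_trans h _; rewrite lerDl sumr_ge0.
  have h2 : - l e <= Mb.
    by have := ler_norm (- l e); rewrite normrN => h; apply: le_trans h (le_Mb e).
  rewrite /BIG => h3; lra.
have [_ /(_ Hn') ->] := Hy (tl e).
by rewrite opprD addrACA subrr addr0.
Qed.

End SP.
Section NPPB.
Variables (R : realType) (V A : finType) (tail head : A -> V) (c : A -> R) (A1 : {set A}) (o d : V).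
Local Open Scope ring_scope.
Local Notation wk := (@walk V A tail head).
Local Notation tarc := (tarc A1).

Definition cw (s : seq A) := \sum_(a <- s) c a.
Definition tw (t : tarc -> R) (s : seq A) := \sum_(a <- s) ext t a.
Definition feas (t : tarc -> R) (y : V -> R) :=
  (forall i, 0 <= t i) /\ forall a, y (tail a) - y (head a) <= c a + ext t a.
Definition wv (s : seq A) : tarc -> R := fun i => (count_mem (val i) s)%:R.
Definition xw (s : seq A) : A -> R := fun a => (count_mem a s)%:R.

Lemma ext_out (t : tarc -> R) a : a \notin A1 -> ext t a = 0.
Proof. by move=> H; rewrite /ext insubF //; apply/negbTE. Qed.

Lemma ext_val (t : tarc -> R) (i : tarc) : ext t (val i) = t i.
Proof. by rewrite /ext valK. Qed.

Lemma ext_ge0 (t : tarc -> R) a : (forall i, 0 <= t i) -> 0 <= ext t a.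
Proof. by move=> H; rewrite /ext; case: insubP => [i _ _|_] /=. Qed.

Lemma ext_scale (t : tarc -> R) k a : ext (fun i => k * t i) a = k * ext t a.
Proof. by rewrite /ext; case: insubP => [i _ _|_] /=; rewrite ?mulr0. Qed.

Lemma ext_le_sum (t : tarc -> R) a : (forall i, 0 <= t i) -> ext t a <= \sum_i t i.
Proof.
move=> H; rewrite /ext; case: insubP => [i _ _|_] /=; last by rewrite sumr_ge0.
by rewrite (bigD1 i) //= lerDl sumr_ge0.
Qed.

Lemma inc_sum (y : V -> R) a : \sum_v inc tail head v a * y v = y (tail a) - y (head a).
Proof.
rewrite /inc; under eq_bigr do rewrite mulrBl.
rewrite sumrB; congr (_ - _).
  by rewrite (bigD1 (tail a)) //= eqxx mul1r big1 ?addr0 // => v /negbTE; rewrite eq_sym => ->; rewrite mul0r.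
by rewrite (bigD1 (head a)) //= eqxx mul1r big1 ?addr0 // => v /negbTE; rewrite eq_sym => ->; rewrite mul0r.
Qed.

Lemma b_sum (y : V -> R) : \sum_v bvec o d v * y v = y o - y d.
Proof.
rewrite /bvec; under eq_bigr do rewrite mulrBl.
rewrite sumrB; congr (_ - _).
  by rewrite (bigD1 o) //= eqxx mul1r big1 ?addr0 // => v /negbTE ->; rewrite mul0r.
by rewrite (bigD1 d) //= eqxx mul1r big1 ?addr0 // => v /negbTE ->; rewrite mul0r.
Qed.

Lemma lp_feasE t y : lp_feas tail head c t y <-> feas t y.
Proof.
rewrite /lp_feas /feas; split=> [[H1 H2]|[H1 H2]]; split=> // a.
  by have := H2 a; rewrite inc_sum lerBlDr.
by rewrite inc_sum lerBlDr; apply: H2.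
Qed.

Lemma sum_count (F : A -> R) s : \sum_a (count_mem a s)%:R * F a = \sum_(a <- s) F a.
Proof.
elim: s => [|b s IH]; first by rewrite big_nil big1 // => a _; rewrite mul0r.
rewrite big_cons -IH.
have -> : \sum_a (count_mem a (b :: s))%:R * F a =
   \sum_a ((b == a)%:R * F a + (count_mem a s)%:R * F a).
  by apply: eq_bigr => a _; rewrite /= natrD mulrDl.
rewrite big_split /=; congr (_ + _).
rewrite (bigD1 b) //= eqxx mul1r big1 ?addr0 // => a Hab.
by rewrite eq_sym (negbTE Hab) mul0r.
Qed.

Lemma sum_ext (G : A -> R) (t : tarc -> R) :
  \sum_a G a * ext t a = \sum_(i : tarc) G (val i) * t i.
Proof.
rewrite (bigID (fun a => a \in A1)) /= [X in _ + X]big1 ?addr0; last first.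
  by move=> a Ha; rewrite ext_out ?mulr0.
rewrite big_sub; apply: eq_bigr => i _; by rewrite ext_val.
Qed.

Lemma tw_dot t s : tw t s = dotT (wv s) t.
Proof.
rewrite /tw -sum_count /dotT.
exact: (sum_ext (fun a => (count_mem a s)%:R) t).
Qed.

Lemma dotTC (u v : tarc -> R) : dotT u v = dotT v u.
Proof. by apply: eq_bigr => i _; rewrite mulrC. Qed.

Lemma walk_flow s : wk o s d -> flowX tail head o d (xw s).
Proof.
move=> Hw; split; last by move=> a; rewrite /xw ler0n.
move=> v; under eq_bigr do rewrite mulrC.
rewrite /xw sum_count.
have := tele (fun u => (u == v)%:R : R) Hw.
move=> H; rewrite /bvec /inc [v == o]eq_sym [v == d]eq_sym -H.
by apply: eq_bigr.
Qed.

Lemma cw_flow s : \sum_a c a * xw s a = cw s.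
Proof. by under eq_bigr do rewrite mulrC; rewrite sum_count. Qed.

Lemma weak_flow t y x : flowX tail head o d x -> feas t y ->
  y o - y d <= \sum_a c a * x a + dotT t (restr x).
Proof.
move=> [Hx Hx0] [Ht Hf].
rewrite -b_sum.
have -> : \sum_v bvec o d v * y v = \sum_v (\sum_a inc tail head v a * x a) * y v.
  by apply: eq_bigr => v _; rewrite Hx.
under eq_bigr do rewrite mulr_suml.
rewrite exchange_big /=.
have -> : \sum_a \sum_v inc tail head v a * x a * y v = \sum_a x a * (y (tail a) - y (head a)).
  apply: eq_bigr => a _; rewrite -inc_sum mulr_sumr; apply: eq_bigr => v _.
  by rewrite mulrCA mulrA.
have -> : dotT t (restr x) = \sum_a x a * ext t a.
  by rewrite sum_ext dotTC; apply: eq_bigr.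
rewrite -big_split /=; apply: ler_sum => a _.
by rewrite mulrC [x a * _]mulrC -mulrDl ler_wpM2r.
Qed.

Lemma weak_walk t y W : feas t y -> wk o W d -> y o - y d <= cw W + tw t W.
Proof.
move=> [_ Hf] HW; rewrite /cw /tw -big_split /=.
exact: (feas_le (l := fun a => c a + ext t a) Hf HW).
Qed.

Lemma sum_le_mem (F : A -> R) s x : (forall a, 0 <= F a) -> x \in s -> F x <= \sum_(a <- s) F a.
Proof.
move=> H0; elim: s => [|b s IH] //; rewrite inE big_cons => /orP [/eqP ->|/IH h].
  by rewrite lerDl sumr_ge0.
by apply: le_trans h _; rewrite lerDr.
Qed.

Lemma sum_ge0_seq (F : A -> R) s : (forall a, 0 <= F a) -> 0 <= \sum_(a <- s) F a.
Proof. by move=> H; rewrite sumr_ge0. Qed.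

End NPPB.
Section NPP2.
Variables (R : realType) (V A : finType) (tail head : A -> V) (c : A -> R) (A1 : {set A}) (o d : V).
Local Open Scope ring_scope.
Hypothesis Hc : forall a, 0 <= c a.
Hypothesis Htf : toll_free_path tail head A1 o d.
Local Notation wk := (@walk V A tail head).
Local Notation tarc := (tarc A1).
Local Notation cw := (cw c).
Local Notation feas := (feas tail head c).

Definition active (Q : seq A) (t : tarc -> R) :=
  wk o Q d /\ forall W, wk o W d -> cw Q + tw t Q <= cw W + tw t W.

Definition simple (Q : seq A) := uniq (o :: map head Q).

Lemma sp_t (t : tarc -> R) : (forall i, 0 <= t i) ->
  exists y W, [/\ feas t y, wk o W d, simple W & y o - y d = cw W + tw t W].
Proof.
move=> Ht; have [s0 [Hs0 _]] := Htf.
have Hpi : forall a, (fun _ : V => 0 : R) (tail a) - (fun _ : V => 0 : R) (head a) <= c a + ext t a.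
  by move=> a; rewrite subrr addr_ge0 // ext_ge0.
have [y [W [Hy HW HU He]]] := @sp_dual V A tail head R (fun a => c a + ext t a) (fun _ => 0) Hpi d o s0 Hs0.
by exists y, W; split=> //; rewrite He /cw /tw big_split.
Qed.

Lemma sp_active (t : tarc -> R) : (forall i, 0 <= t i) ->
  exists W, [/\ active W t & simple W].
Proof.
move=> Ht; have [y [W [Hy HW HU He]]] := sp_t Ht.
exists W; split=> //; split=> // W' HW'; rewrite -He.
exact: (weak_walk Hy HW').
Qed.

Lemma pos_lb (T : eqType) (s : seq T) (G : T -> R) :
  exists2 g, 0 < g & forall x, x \in s -> 0 < G x -> g <= G x.
Proof.
elim: s => [|a s [g Hg HG]]; first by exists 1.
case: (ltP 0 (G a)) => Ha.
  exists (Num.min g (G a)); first by rewrite lt_min Hg Ha.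
  move=> x; rewrite inE => /orP [/eqP -> _|Hx Hpx]; rewrite ge_min ?lexx ?orbT //.
  by rewrite HG.
exists g => // x; rewrite inE => /orP [/eqP -> H|]; [by move: Ha; rewrite leNgt H | exact: HG].
Qed.

Lemma tw_ge0 (t : tarc -> R) (s : seq A) : (forall i, 0 <= t i) -> 0 <= tw t s.
Proof. by move=> H; rewrite /tw sumr_ge0 // => a _; rewrite ext_ge0. Qed.

Lemma cw_ge0 (s : seq A) : 0 <= cw s.
Proof. by rewrite /cw sumr_ge0. Qed.

Lemma tw_bound (t : tarc -> R) (s : seq A) : (forall i, 0 <= t i) -> tw t s <= (size s)%:R * \sum_i t i.
Proof.
move=> H; elim: s => [|a s IH]; first by rewrite /tw big_nil mul0r.
rewrite /tw big_cons /= -addn1 natrD mulrDl mul1r addrC lerD //.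
exact: ext_le_sum.
Qed.

Lemma key_bound (w' t' : tarc -> R) : (forall i, 0 <= w' i) -> Tset tail head c o d w' t' ->
  exists Q, [/\ active Q t', simple Q & dotT w' t' <= tw t' Q].
Proof.
move=> Hw [y' [/lp_feasE Hf' Hopt]].
have Ht' := Hf'.1.
pose be := y' o - y' d.
have weak W : wk o W d -> be <= cw W + tw t' W by move=> HW; exact: (weak_walk Hf' HW).
pose L := [seq s <- allseq A #|V| | walkb tail head o s d].
have [g Hg HG] := pos_lb L (fun s => cw s + tw t' s - be).
pose B := #|V|%:R * \sum_i t' i + 1.
have HB0 : 0 < B by rewrite /B ltr_wpDl // mulr_ge0 // sumr_ge0.
pose eta := g / (g + B).
have Heta0 : 0 < eta by rewrite /eta divr_gt0 // addr_gt0.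
have HgB : 0 < g + B by rewrite addr_gt0.
have Heta1 : eta < 1 by rewrite /eta (ltr_pdivrMr _ _ HgB) mul1r ltrDl.
have HetaB : eta * B < g.
  rewrite /eta mulrAC (ltr_pdivrMr _ _ HgB); nra.
pose tl := fun i => (1 - eta) * t' i.
have Htl : forall i, 0 <= tl i by move=> i; rewrite /tl mulr_ge0 // subr_ge0 ltW.
have [yl [W [Hyl HW HU He]]] := sp_t Htl.
have := Hopt tl yl; rewrite (lp_feasE) => /(_ Hyl).
rewrite /lp_obj !b_sum He.
have -> : dotT w' tl = (1 - eta) * dotT w' t'.
  by rewrite /dotT mulr_sumr; apply: eq_bigr => i _; rewrite /tl mulrCA.
have -> : tw tl W = (1 - eta) * tw t' W.
  by rewrite /tw mulr_sumr; apply: eq_bigr => a _; rewrite ext_scale.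
move=> Hineq.
have HR0 : 0 <= dotT w' t' by rewrite sumr_ge0 // => i _; rewrite mulr_ge0.
have HT0 : 0 <= tw t' W := tw_ge0 _ Ht'.
have HTB : tw t' W <= B.
  apply: le_trans (tw_bound W Ht') _; rewrite /B ler_wpDr // ler_wpM2r ?sumr_ge0 //.
  by rewrite ler_nat ltnW // (uniq_size HU).
have Hgap : cw W + tw t' W - be <= eta * tw t' W - eta * dotT w' t' by rewrite /be; lra.
have Hgap2 : cw W + tw t' W - be < g.
  apply: le_lt_trans Hgap _; apply: le_lt_trans HetaB.
  rewrite lerBlDr; apply: le_trans (ler_wpM2l (ltW Heta0) HTB) _.
  by rewrite lerDl mulr_ge0 // ltW.
have Hgap0 : cw W + tw t' W - be = 0.
  apply/eqP; rewrite eq_le; apply/andP; split; last by rewrite subr_ge0 weak.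
  rewrite leNgt; apply/negP => Hpos.
  have WL : W \in L by rewrite mem_filter; apply/andP; split; [apply/walkP | apply: allseqP; apply: ltnW; exact: (uniq_size HU)].
  by have := HG _ WL Hpos; rewrite leNgt Hgap2.
exists W; split=> //.
  split=> // W' HW'; apply: le_trans (weak _ HW'); move/eqP: Hgap0; rewrite subr_eq0 => /eqP ->; by [].
have : eta * dotT w' t' <= eta * tw t' W by lra.
by rewrite ler_pM2l.
Qed.

End NPP2.
Section NPP3.
Variables (R : realType) (V A : finType) (tail head : A -> V) (c : A -> R) (A1 : {set A}) (o d : V).
Local Open Scope ring_scope.
Hypothesis Hc : forall a, 0 <= c a.
Hypothesis Htf : toll_free_path tail head A1 o d.
Local Notation wk := (@walk V A tail head).
Local Notation tarc := (tarc A1).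
Local Notation cw := (cw c).
Local Notation feas := (feas tail head c).
Local Notation active := (active tail head c o d).
Local Notation simple := (simple head o).

Definition hq (Q : seq A) (x : A + A) : bool :=
  match x with inl a => a \notin A1 | inr a => a \in Q end.
Definition HE (Q : seq A) := {x : A + A | hq Q x}.
Definition tlH Q (e : HE Q) : V := match val e with inl a => tail a | inr a => head a end.
Definition hdH Q (e : HE Q) : V := match val e with inl a => head a | inr a => tail a end.
Definition lH Q (e : HE Q) : R := match val e with inl a => c a | inr a => - c a end.

Lemma potH Q (t : tarc -> R) y : feas t y -> (forall a, a \in Q -> c a <= y (tail a) - y (head a)) ->
  forall e : HE Q, y (tlH e) - y (hdH e) <= lH e.
Proof.
move=> [_ Hf] HQ [[a|a] h]; rewrite /tlH /hdH /lH /=.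
  by have := Hf a; rewrite ext_out ?addr0.
by rewrite -opprB lerN2; apply: HQ.
Qed.

Lemma active_pot Q (t : tarc -> R) : (forall i, 0 <= t i) -> active Q t ->
  exists y, [/\ feas t y, y o - y d = cw Q + tw t Q &
    forall a, a \in Q -> c a + ext t a <= y (tail a) - y (head a)].
Proof.
move=> Ht [HQ Hact]; have [y [W [Hy HW _ He]]] := sp_t Hc Htf Ht.
have Heq : y o - y d = cw Q + tw t Q.
  apply/eqP; rewrite eq_le; apply/andP; split; first exact: (weak_walk Hy HQ).
  by rewrite He; apply: Hact.
exists y; split=> // a Ha.
have Hsl : forall b, 0 <= c b + ext t b - (y (tail b) - y (head b)).
  by move=> b; rewrite subr_ge0; apply: Hy.2.
have := @sum_le_mem R A (fun b => c b + ext t b - (y (tail b) - y (head b))) Q a Hsl Ha.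
rewrite /= sumrB big_split /= (tele y HQ) -Heq /cw /tw subrr.
by rewrite subr_le0.
Qed.

Lemma tf_walkH Q s u v : wk u s v -> all (fun a => a \notin A1) s ->
  exists s', walk (@tlH Q) (@hdH Q) u s' v.
Proof.
elim: s u => [|a s IH] u /=; first by move=> ->; exists [::].
move=> [Ha Hw] /andP [Hna Hall]; have [s' Hs'] := IH _ Hw Hall.
have h : hq Q (inl a) by [].
by exists (exist _ (inl a) h :: s'); split.
Qed.

Lemma ext_in (t : tarc -> R) a : a \in A1 -> exists i : tarc, val i = a /\ ext t a = t i.
Proof. by move=> Ha; exists (Sub a Ha); rewrite SubK; split=> //; rewrite -[in LHS](SubK tarc Ha) ext_val. Qed.

Lemma bestQ Q (t0 : tarc -> R) : (forall i, 0 <= t0 i) -> active Q t0 ->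
  exists tQ : tarc -> R, [/\ forall i, 0 <= tQ i, active Q tQ &
    forall t : tarc -> R, (forall i, 0 <= t i) -> active Q t -> tw t Q <= tw tQ Q].
Proof.
move=> Ht0 Hact0.
have [y0 [Hy0 _ Hsl0]] := active_pot Ht0 Hact0.
have Hsl0' : forall a, a \in Q -> c a <= y0 (tail a) - y0 (head a).
  by move=> a Ha; apply: le_trans (Hsl0 a Ha); rewrite lerDl ext_ge0.
have Hpi := potH Hy0 Hsl0'.
have [s0 [Hs0 Hall]] := Htf.
have [sH HsH] := tf_walkH Q Hs0 Hall.
have [ys [WH [Hys HWH _ Hes]]] := @sp_dual V (HE Q) (@tlH Q) (@hdH Q) R (@lH Q) y0 Hpi d o sH HsH.
pose tQ := fun i : tarc => Num.max 0 (ys (tail (val i)) - ys (head (val i)) - c (val i)).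
have HtQ : forall i, 0 <= tQ i by move=> i; rewrite /tQ le_max lexx.
have Hinl : forall a, a \notin A1 -> ys (tail a) - ys (head a) <= c a.
  by move=> a h; exact: (Hys (exist _ (inl a) h)).
have Hinr : forall a, a \in Q -> c a <= ys (tail a) - ys (head a).
  move=> a h; have := Hys (exist (fun x => hq Q x) (inr a) h).
  by rewrite /tlH /hdH /lH /= -opprB lerN2.
have Hfeas : feas tQ ys.
  split=> // a; case: (boolP (a \in A1)) => Ha.
    have [i [Hi ->]] := ext_in tQ Ha.
    by rewrite /tQ Hi -lerBlDl le_max lexx orbT.
  by rewrite ext_out // addr0; apply: Hinl.
have Htight : forall a, a \in Q -> ys (tail a) - ys (head a) = c a + ext tQ a.
  move=> a HaQ; case: (boolP (a \in A1)) => Ha.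
    have [i [Hi ->]] := ext_in tQ Ha.
    rewrite /tQ Hi max_r; first by rewrite [RHS]addrC subrK.
    by rewrite subr_ge0; apply: Hinr.
  rewrite ext_out // addr0; apply/eqP; rewrite eq_le Hinl //=; exact: Hinr.
have [HQ _] := Hact0.
have HtwQ : cw Q + tw tQ Q = ys o - ys d.
  rewrite -(tele ys HQ) /cw /tw -big_split /=; apply: eq_big_seq => a Ha.
  by rewrite Htight.
exists tQ; split=> //.
  split=> // W HW; rewrite HtwQ; exact: (weak_walk Hfeas HW).
move=> t Ht Hact.
have [y [Hy Hye Hsl]] := active_pot Ht Hact.
have Hsl' : forall a, a \in Q -> c a <= y (tail a) - y (head a).
  by move=> a Ha; apply: le_trans (Hsl a Ha); rewrite lerDl ext_ge0.
have Hp := potH Hy Hsl'.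
have := feas_le Hp HWH; rewrite -Hes Hye -HtwQ.
by rewrite lerD2l.
Qed.

End NPP3.
Section NPP4.
Variables (R : realType) (V A : finType) (tail head : A -> V) (c : A -> R) (A1 : {set A}) (o d : V).
Local Open Scope ring_scope.
Hypothesis Hc : forall a, 0 <= c a.
Hypothesis Htf : toll_free_path tail head A1 o d.
Local Notation wk := (@walk V A tail head).
Local Notation tarc := (tarc A1).
Local Notation cw := (cw c).
Local Notation feas := (feas tail head c).
Local Notation active := (active tail head c o d).
Local Notation simple := (simple head o).

Lemma simplify_active Q (t : tarc -> R) : (forall i, 0 <= t i) -> active Q t ->
  exists Q2, [/\ active Q2 t, simple Q2, tw t Q <= tw t Q2 & {subset Q2 <= Q}].
Proof.
move=> Ht [HQ Hact].
have [Q2 [HQ2 HU Hsub HF]] := shorten R HQ.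
have H1 : cw Q2 + tw t Q2 <= cw Q + tw t Q.
  rewrite /cw /tw -!big_split /=; apply: HF => x r _.
  by apply: sumr_ge0 => a _; rewrite addr_ge0 // ext_ge0.
have H2 : cw Q2 <= cw Q by apply: HF => x r _; apply: sumr_ge0.
have H3 := Hact _ HQ2.
exists Q2; split=> //; last by lra.
by split=> // W HW; apply: le_trans H1 (Hact _ HW).
Qed.

Lemma inL s : wk o s d -> simple s ->
  s \in [seq s <- allseq A #|V| | walkb tail head o s d && simple s].
Proof.
move=> /walkP Hw Hu; rewrite mem_filter Hw Hu /=; apply: allseqP.
exact: ltnW (uniq_size Hu).
Qed.

Lemma opt_list (ls : seq (seq A)) :
  (forall Q (t : tarc -> R), Q \in ls -> (forall i, 0 <= t i) -> ~ active Q t) \/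
  exists P (t : tarc -> R), [/\ forall i, 0 <= t i, active P t, P \in ls &
    forall Q (t' : tarc -> R), Q \in ls -> (forall i, 0 <= t' i) -> active Q t' -> tw t' Q <= tw t P].
Proof.
elim: ls => [|Q ls IH]; first by left.
case: (pselect (exists t0 : tarc -> R, (forall i, 0 <= t0 i) /\ active Q t0)) => [[t0 [Ht0 Ha0]]|Hn].
  have [tQ [HtQ HaQ HbQ]] := bestQ Hc Htf Ht0 Ha0.
  case: IH => [IH|[P [t [Ht HaP HP HbP]]]].
    right; exists Q, tQ; split=> //; first by rewrite inE eqxx.
    move=> Q' t'; rewrite inE => /orP [/eqP ->|HQ'] Ht' Ha'; first exact: HbQ.
    by exfalso; apply: (IH Q' t').
  right; case: (leP (tw tQ Q) (tw t P)) => Hle.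
    exists P, t; split=> //; first by rewrite inE HP orbT.
    move=> Q' t'; rewrite inE => /orP [/eqP ->|HQ'] Ht' Ha'.
      exact: le_trans (HbQ _ Ht' Ha') Hle.
    exact: HbP.
  exists Q, tQ; split=> //; first by rewrite inE eqxx.
  move=> Q' t'; rewrite inE => /orP [/eqP ->|HQ'] Ht' Ha'; first exact: HbQ.
  exact: le_trans (HbP _ _ HQ' Ht' Ha') (ltW Hle).
case: IH => [IH|[P [t [Ht HaP HP HbP]]]].
  left=> Q' t'; rewrite inE => /orP [/eqP ->|HQ'] Ht' Ha'.
    by apply: Hn; exists t'.
  exact: (IH Q' t').
right; exists P, t; split=> //; first by rewrite inE HP orbT.
move=> Q' t'; rewrite inE => /orP [/eqP ->|HQ'] Ht' Ha'.
  by exfalso; apply: Hn; exists t'.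
exact: HbP.
Qed.

Lemma opt_exists : exists P (t : tarc -> R), [/\ forall i, 0 <= t i, active P t, simple P &
  forall Q (t' : tarc -> R), (forall i, 0 <= t' i) -> active Q t' -> tw t' Q <= tw t P].
Proof.
pose L := [seq s <- allseq A #|V| | walkb tail head o s d && simple s].
case: (opt_list L) => [H|[P [t [Ht HaP HP HbP]]]].
  have H0 : forall i : tarc, 0 <= (fun _ => 0 : R) i by [].
  have [W [HW HU]] := sp_active Hc Htf H0.
  by exfalso; apply: (H W _ (inL HW.1 HU) H0).
exists P, t; split=> //.
  by move: HP; rewrite mem_filter => /andP [/andP [_ ->]].
move=> Q t' Ht' Ha'.
have [Q2 [Ha2 HU2 Hle _]] := simplify_active Ht' Ha'.
apply: le_trans Hle _; apply: HbP => //; exact: inL Ha2.1 HU2.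
Qed.

Definition cnt (s : seq A) := count (fun a => a \in A1) s.

Lemma opt_min : exists P (t : tarc -> R), [/\ forall i, 0 <= t i, active P t, simple P,
  (forall Q (t' : tarc -> R), (forall i, 0 <= t' i) -> active Q t' -> tw t' Q <= tw t P) &
  forall Q, simple Q -> active Q t -> tw t P <= tw t Q -> (cnt P <= cnt Q)%N].
Proof.
have [P0 [t0 [Ht0 Ha0 Hs0 Hb0]]] := opt_exists.
pose OPT := tw t0 P0.
pose pr := fun n => `[< exists Q (t : tarc -> R), [/\ forall i, 0 <= t i, active Q t, simple Q,
   OPT <= tw t Q & cnt Q = n] >].
have exP : exists n, pr n by exists (cnt P0); apply/asboolP; exists P0, t0; split.
case: (ex_minnP exP) => n /asboolP [P [t [Ht Ha Hs Hopt Hn]]] Hmin.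
exists P, t; split=> //.
  move=> Q t' Ht' Ha'; apply: le_trans (Hb0 _ _ Ht' Ha') Hopt.
move=> Q HQ HaQ Hle; rewrite Hn; apply: Hmin; apply/asboolP.
by exists Q, t; split=> //; apply: le_trans Hle.
Qed.

End NPP4.
Section GV.
Variables (R : realType) (V A : finType) (tail head : A -> V) (c : A -> R) (A1 : {set A}) (o d : V).
Local Open Scope ring_scope.
Local Notation wk := (@walk V A tail head).
Local Notation tarc := (tarc A1).
Local Notation feas := (feas tail head c).
Local Notation g := (g_val tail head c o d).
Hypothesis Hc : forall a, 0 <= c a.

Lemma g_lb (p tau : tarc -> R) (y : V -> R) : feas tau y ->
  ((y o - y d - dotT tau p)%:E <= g p)%E.
Proof.
move=> Hf.
have Hfv : ((y o - y d)%:E <= f_val tail head c o d tau)%E.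
  have [Ht _] := Hf; rewrite /f_val (asboolT Ht).
  apply: le_ereal_inf_tmp => z [x Hx <-].
  have := weak_flow Hx Hf; rewrite -lee_fin; exact.
have Hmem : ([set (f_val tail head c o d t - (dotT t p)%:E)%E | t in [set: tarc -> R]])%classic
   (f_val tail head c o d tau - (dotT tau p)%:E)%E by exists tau.
apply: (le_trans _ (@ereal_sup_ubound R _ _ Hmem)).
by rewrite EFinB; apply: leeB.
Qed.

Lemma g_ub (P : seq A) : wk o P d -> (g (wv R (A1:=A1) P) <= (cw c P)%:E)%E.
Proof.
move=> HP; apply: ge_ereal_sup => z [t _ <-].
rewrite /f_val; case: ifP => Ht; last by rewrite leNye.
have Hle : (ereal_inf [set ((\sum_(a : A) c a * x a) + dotT t (restr x))%:E | x in flowX tail head o d]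
   <= (cw c P + dotT t (wv R (A1:=A1) P))%:E)%E.
  apply: ereal_inf_lbound; exists (xw R P); first exact: walk_flow.
  by rewrite cw_flow.
have := leeB Hle (lexx (dotT t (wv R (A1:=A1) P))%:E).
by rewrite -EFinB addrK.
Qed.

Lemma g_nonneg (p : tarc -> R) (r : R) : (g p <= r%:E)%E -> forall i, 0 <= p i.
Proof.
move=> Hg i; rewrite leNgt; apply/negP => Hpi.
pose K := (`|r| + 1) / (- p i).
have HK : 0 <= K by rewrite /K divr_ge0 // ?addr_ge0 // oppr_ge0 ltW.
pose tau := fun j : tarc => if j == i then K else 0.
have Htau : forall j, 0 <= tau j by move=> j; rewrite /tau; case: ifP.
have Hf : feas tau (fun _ => 0).
  by split=> // a; rewrite subrr addr_ge0 // (ext_ge0 a Htau).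
have := le_trans (g_lb p Hf) Hg; rewrite lee_fin subrr sub0r.
have -> : dotT tau p = K * p i.
  rewrite /dotT (bigD1 i) //= big1 ?addr0 /tau ?eqxx // => j /negbTE ->; by rewrite mul0r.
have -> : - (K * p i) = `|r| + 1.
  by rewrite -mulrN /K -mulrA mulVf ?mulr1 // oppr_eq0 lt_eqF.
by move=> H; have := ler_norm r; lra.
Qed.
End GV.
Local Open Scope ring_scope.
Lemma conv0 (R : realType) (l a b : R) : 0 < l -> l < 1 -> 0 <= a -> 0 <= b ->
  l * a + (1 - l) * b = 0 -> a = 0.
Proof.
move=> Hl0 Hl1 Ha Hb H.
have h1 : 0 <= l * a by rewrite mulr_ge0 // ltW.
have h2 : 0 <= (1 - l) * b by rewrite mulr_ge0 // subr_ge0 ltW.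
have : l * a = 0 by lra.
by move/eqP; rewrite mulf_eq0 gt_eqF //= => /eqP.
Qed.

Lemma sum_ind (R : realType) (A : eqType) (s : seq A) x (e : R) :
  \sum_(a <- s) (if a == x then e else 0) = (count_mem x s)%:R * e.
Proof.
elim: s => [|b s IH]; first by rewrite big_nil mul0r.
rewrite big_cons IH /= natrD mulrDl; congr (_ + _).
by case: (b == x); rewrite ?mul1r ?mul0r.
Qed.

Section Cand.
Variables (R : realType) (V A : finType) (tail head : A -> V) (c : A -> R) (A1 : {set A}) (o d : V).
Local Open Scope ring_scope.
Hypothesis Hc : forall a, 0 <= c a.
Hypothesis Htf : toll_free_path tail head A1 o d.
Local Notation wk := (@walk V A tail head).
Local Notation tarc := (tarc A1).
Local Notation cw := (cw c).
Local Notation feas := (feas tail head c).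
Local Notation active := (active tail head c o d).
Local Notation simple := (simple head o).
Local Notation cnt := (cnt A1).
Variables (P : seq A) (ts : tarc -> R).
Hypotheses (Hts : forall i, 0 <= ts i) (HaP : active P ts) (HsP : simple P)
  (Hmin : forall Q, simple Q -> active Q ts -> tw ts P <= tw ts Q -> (cnt P <= cnt Q)%N).
Local Notation w := (wv R (A1:=A1) P).
Local Notation cP := (cw P).

Lemma simple_uniq Q : simple Q -> uniq Q.
Proof. by rewrite /simple /= => /andP [_ /map_uniq]. Qed.

Lemma P_uniq : uniq P. Proof. exact: simple_uniq. Qed.

Lemma tw_sub (t : tarc -> R) W : (forall i, 0 <= t i) -> uniq W ->
  (forall a, a \in W -> a \in A1 -> a \in P) -> tw t W <= tw t P.
Proof.
move=> Ht HW Hs; rewrite /tw !big_uniq ?P_uniq //= [X in _ <= X]big_mkcond [X in X <= _]big_mkcond /=.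
apply: ler_sum => a _; case: ifP => HaW; last by case: ifP => _ //; rewrite ext_ge0.
case: (boolP (a \in A1)) => HaA; first by rewrite (Hs a HaW HaA).
by rewrite ext_out //; case: ifP => _ //; rewrite ext_ge0.
Qed.

Lemma cnt_lt W x : uniq W -> (forall a, a \in W -> a \in A1 -> a \in P) ->
  x \in P -> x \in A1 -> x \notin W -> (cnt W < cnt P)%N.
Proof.
move=> HW Hs HxP HxA HxW.
rewrite /cnt -!size_filter.
have /card_uniqP <- := filter_uniq (fun a => a \in A1) HW.
have /card_uniqP <- := filter_uniq (fun a => a \in A1) P_uniq.
apply: proper_card; apply/properP; split.
  apply/fintype.subsetP => a; rewrite !mem_filter => /andP [Ha HaW].
  by rewrite Ha (Hs a HaW Ha).
by exists x; rewrite !mem_filter ?HxA ?HxP // (negbTE HxW).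
Qed.

Lemma B1 W : wk o W d -> simple W -> (forall a, a \in W -> a \in A1 -> a \in P) -> cP <= cw W.
Proof.
move=> HW HsW Hs; have := HaP.2 W HW; have := tw_sub Hts (simple_uniq HsW) Hs; lra.
Qed.

Lemma B2 W x : wk o W d -> simple W -> (forall a, a \in W -> a \in A1 -> a \in P) ->
  x \in P -> x \in A1 -> x \notin W -> cP < cw W.
Proof.
move=> HW HsW Hs HxP HxA HxW; rewrite ltNge; apply/negP => Hle.
have Htw := tw_sub Hts (simple_uniq HsW) Hs.
have H1 := HaP.2 W HW.
have HaW : active W ts.
  split=> // W0 HW0; have := HaP.2 W0 HW0; lra.
have := Hmin HsW HaW (ltac:(lra)).
by rewrite leqNgt (cnt_lt (simple_uniq HsW) Hs HxP HxA HxW).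
Qed.

Lemma cP_ge0 : 0 <= cP. Proof. by rewrite sumr_ge0. Qed.

Lemma exists_eps : exists eps : R, [/\ 0 < eps, eps <= 1 &
  forall W, wk o W d -> simple W -> cP < cw W -> cP + eps <= cw W].
Proof.
pose L := [seq s <- allseq A #|V| | walkb tail head o s d && simple s].
have [g Hg HG] := pos_lb L (fun s => cw s - cP).
have H1g : 0 < 1 + g by rewrite addr_gt0.
exists (g / (1 + g)); split.
- by rewrite divr_gt0.
- by rewrite ler_pdivrMr // mul1r lerDr ltW.
- move=> W HW HsW Hlt.
  have := HG W (inL HW HsW) (ltac:(by rewrite subr_gt0)).
  have : g / (1 + g) <= g by rewrite ler_pdivrMr // mulrDr mulr1 lerDl mulr_ge0 // ltW.
  lra.
Qed.

Section Eps.
Variable eps : R.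
Hypotheses (He0 : 0 < eps) (He1 : eps <= 1)
  (HeW : forall W, wk o W d -> simple W -> cP < cw W -> cP + eps <= cw W).

Definition tau (oj : option tarc) : tarc -> R :=
  fun i => if val i \in P then (if oj == Some i then eps else 0) else cP + 1.

Lemma tau_ge0 oj i : 0 <= tau oj i.
Proof.
rewrite /tau; case: ifP => _; last by rewrite addr_ge0 // cP_ge0.
by case: ifP => _ //; rewrite ltW.
Qed.

Lemma ext_tauP oj a : a \in P ->
  ext (tau oj) a = if oj is Some j then (if a == val j then eps else 0) else 0.
Proof.
move=> HaP'; case: (boolP (a \in A1)) => HaA.
  have [i [Hi ->]] := ext_in (tau oj) HaA.
  rewrite /tau -Hi in HaP' *; rewrite HaP'; case: oj => [j|] //=.
  by rewrite val_eqE eq_sym.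
rewrite ext_out //; case: oj => [j|] //.
case: eqP => // Ha; by move: HaA; rewrite Ha (valP j).
Qed.

Lemma tw_tau_le oj : tw (tau oj) P <= (if oj is Some _ then eps else 0).
Proof.
rewrite /tw (eq_big_seq _ (fun a Ha => ext_tauP oj Ha)).
case: oj => [j|]; last by rewrite big1.
rewrite sum_ind; case: (boolP (val j \in P)) => Hj.
  by rewrite count_uniq_mem ?P_uniq // Hj mul1r.
by rewrite (count_memPn Hj) mul0r ltW.
Qed.

Lemma tight oj : (if oj is Some j then val j \in P else true) -> forall W, wk o W d ->
  cP + tw (tau oj) P <= cw W + tw (tau oj) W.
Proof.
move=> Hoj W HW.
pose bnd : R := if oj is Some _ then eps else 0.
have Hbnd : bnd <= 1 by rewrite /bnd; case: (oj) => [_|]; [exact: He1 | exact: ler01].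
apply: le_trans (_ : cP + bnd <= _); first by rewrite lerD2l; apply: tw_tau_le.
have Htau := tau_ge0 oj.
case: (boolP (has (fun a => (a \in A1) && (a \notin P)) W)).
  move=> /hasP [x HxW /andP [HxA HxP]].
  have [i [Hi Hx]] := ext_in (tau oj) HxA.
  have : ext (tau oj) x <= tw (tau oj) W.
    by apply: sum_le_mem => // a; apply: ext_ge0.
  rewrite Hx /tau Hi (negbTE HxP).
  have := cw_ge0 Hc W; lra.
move=> /hasPn Hn.
have Hs : forall a, a \in W -> a \in A1 -> a \in P.
  by move=> a HaW HaA; have := Hn a HaW; rewrite HaA /= negbK.
have [W2 [HW2 HU2 Hsub HF]] := shorten R HW.
have Hs2 : forall a, a \in W2 -> a \in A1 -> a \in P by move=> a /Hsub; apply: Hs.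
have Hle : cw W2 + tw (tau oj) W2 <= cw W + tw (tau oj) W.
  rewrite /cw /tw -!big_split /=; apply: HF => x r _.
  by apply: sumr_ge0 => a _; rewrite addr_ge0 // ext_ge0.
apply: le_trans Hle.
have HB1 := B1 HW2 HU2 Hs2.
have Htw0 := tw_ge0 W2 Htau.
rewrite /bnd; case: oj Hoj Htau Htw0 {Hbnd bnd} => [j Hj|_] Htau Htw0; last by lra.
case: (boolP (val j \in W2)) => HjW.
  have : ext (tau (Some j)) (val j) <= tw (tau (Some j)) W2.
    by apply: sum_le_mem => // a; apply: ext_ge0.
  by rewrite ext_val /tau Hj eqxx; lra.
have := HeW HW2 HU2 (B2 HW2 HU2 Hs2 Hj (valP j) HjW); lra.
Qed.

Lemma cert oj : (if oj is Some j then val j \in P else true) ->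
  exists y, feas (tau oj) y /\ cP + tw (tau oj) P <= y o - y d.
Proof.
move=> Hoj; have [y [W [Hy HW _ He]]] := sp_t Hc Htf (tau_ge0 oj).
by exists y; split=> //; rewrite He; apply: tight.
Qed.

Lemma dot_tau (v : tarc -> R) : (forall i, val i \notin P -> v i = 0) ->
  dotT (tau None) v = 0 /\ forall j, val j \in P -> dotT (tau (Some j)) v = eps * v j.
Proof.
move=> Hv; split.
  rewrite /dotT big1 // => i _; rewrite /tau; case: ifP => H; first by rewrite mul0r.
  by rewrite Hv ?mulr0 // H.
move=> j Hj; rewrite /dotT (bigD1 j) //= big1 ?addr0; first by rewrite /tau Hj eqxx.
move=> i Hij; rewrite /tau; case: ifP => H.
  by case: eqP => [[Hji]|_]; [move: Hij; rewrite Hji eqxx | rewrite mul0r].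
by rewrite Hv ?mulr0 // H.
Qed.

Lemma extreme (p q : pt A1) l : epi_g tail head c o d p -> epi_g tail head c o d q ->
  0 < l < 1 -> comb l p q = (w, cP) -> p = (w, cP) /\ q = (w, cP).
Proof.
case: p => p1 rp; case: q => q1 rq; rewrite /epi_g /= => Hp Hq /andP [Hl0 Hl1] Hcomb.
have Hw : forall i, l * p1 i + (1 - l) * q1 i = w i.
  by move=> i; have := congr1 (fun z => z.1 i) Hcomb.
have Hr : l * rp + (1 - l) * rq = cP by have := congr1 snd Hcomb.
have Hp0 := g_nonneg Hc Hp; have Hq0 := g_nonneg Hc Hq.
have Hl1' : 0 < 1 - l by rewrite subr_gt0.
have off : forall i, val i \notin P -> p1 i = 0 /\ q1 i = 0.
  move=> i Hi; have Hwi : w i = 0 by rewrite /wv (count_memPn Hi).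
  have Hp1 : p1 i = 0 by apply: (conv0 Hl0 Hl1 (Hp0 i) (Hq0 i)); rewrite Hw.
  split=> //; have := Hw i; rewrite Hp1 mulr0 add0r Hwi => /eqP; rewrite mulf_eq0 gt_eqF //=.
  by move/eqP.
have woff : forall i, val i \notin P -> w i = 0 by move=> i Hi; rewrite /wv (count_memPn Hi).
have alpha : forall oj, (if oj is Some j then val j \in P else true) ->
    rp = cP + dotT (tau oj) w - dotT (tau oj) p1.
  move=> oj Hoj; have [y [Hy Hyo]] := cert Hoj.
  have Hgp := le_trans (g_lb o d p1 Hy) Hp; have Hgq := le_trans (g_lb o d q1 Hy) Hq.
  rewrite lee_fin in Hgp; rewrite lee_fin in Hgq.
  rewrite tw_dot dotTC in Hyo.
  have HD : dotT (tau oj) w = l * dotT (tau oj) p1 + (1 - l) * dotT (tau oj) q1.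
    rewrite /dotT !mulr_sumr -big_split /=; apply: eq_bigr => i _.
    by rewrite -Hw; ring.
  set Dw := dotT (tau oj) w in Hyo HD *; set Dp := dotT (tau oj) p1 in Hgp HD *;
  set Dq := dotT (tau oj) q1 in Hgq HD *.
  have Ha : 0 <= rp - (cP + Dw - Dp) by lra.
  have Hb : 0 <= rq - (cP + Dw - Dq) by lra.
  have Hab : l * (rp - (cP + Dw - Dp)) + (1 - l) * (rq - (cP + Dw - Dq)) = 0.
    have -> : l * (rp - (cP + Dw - Dp)) + (1 - l) * (rq - (cP + Dw - Dq)) =
      (l * rp + (1 - l) * rq) - cP - Dw + (l * Dp + (1 - l) * Dq) by ring.
    by rewrite Hr -HD; ring.
  have := conv0 Hl0 Hl1 Ha Hb Hab; lra.
have [Dw0 Dwj] := dot_tau (v := w) woff.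
have [Dp0 Dpj] := dot_tau (v := p1) (fun i Hi => (off i Hi).1).
have Hrp : rp = cP by have := alpha None isT; rewrite Dw0 Dp0; lra.
have Hp1 : p1 = w.
  apply: funext => i; case: (boolP (val i \in P)) => Hi; last by rewrite (off i Hi).1 woff.
  have := alpha (Some i) Hi; rewrite Dwj // Dpj // Hrp => H.
  have : eps * (w i - p1 i) = 0 by rewrite mulrBr; lra.
  move/eqP; rewrite mulf_eq0 gt_eqF //= subr_eq0 => /eqP; by [].
have Hq1 : q1 = w.
  apply: funext => i; have := Hw i; rewrite Hp1 => H.
  have : (1 - l) * (q1 i - w i) = 0.
    have -> : (1 - l) * (q1 i - w i) = (l * w i + (1 - l) * q1 i) - w i by ring.
    by rewrite H subrr.
  by move/eqP; rewrite mulf_eq0 gt_eqF //= subr_eq0 => /eqP.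
have Hrq : rq = cP.
  have : (1 - l) * (rq - cP) = 0.
    have -> : (1 - l) * (rq - cP) = (l * rp + (1 - l) * rq) - cP by rewrite Hrp; ring.
    by rewrite Hr subrr.
  by move/eqP; rewrite mulf_eq0 gt_eqF //= subr_eq0 => /eqP.
by rewrite Hp1 Hq1 Hrp Hrq.
Qed.

Lemma face : is_face (epi_g tail head c o d) [set (w, cP)]%classic.
Proof.
split; first by move=> x ->; rewrite /epi_g /=; exact: (g_ub c A1 HaP.1).
split.
  move=> p q l -> -> _; rewrite /comb /=; congr (_, _); last by ring.
  by apply: funext => i; ring.
move=> p q l Hp Hq Hl Hcomb; exact: extreme Hp Hq Hl Hcomb.
Qed.

End Eps.
End Cand.

Theorem theorem3 (R : realType) (V A : finType) (tail head : A -> V)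
  (c : A -> R) (A1 : {set A}) (o d : V) :
  (forall a, 0 <= c a) ->
  A1 != finset.set0 ->
  A1 \proper [set: A] ->
  o != d ->
  toll_free_path tail head A1 o d ->
  exists (w t : tarc A1 -> R),
    @strongly_bilevel_feasible R V A tail head c A1 o d w /\
    @cbp_optimal R V A tail head c A1 o d w t.
Proof.
move=> Hc _ _ _ Htf.
have [P [ts [Hts HaP HsP Hbest Hmin]]] := opt_min Hc Htf.
have [eps [He0 He1 HeW]] := exists_eps tail head c o d P.
have Hw0 : forall i, 0 <= wv R (A1:=A1) P i by move=> i; rewrite /wv ler0n.
exists (wv R (A1:=A1) P), ts; split.
  split=> //; exists [set (wv R (A1:=A1) P, cw c P)]%classic; split.
    exact: (face Hc Htf Hts HaP HsP Hmin He0 He1 HeW).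
  split.
    apply: funext => x; apply: propext; split.
      by move=> [r Hr]; case: Hr.
    by move=> ->; exists (cw c P).
  move=> [u [v [Hu [Hv He]]]].
  have aff2 : forall z, aff [set (wv R (A1:=A1) P, cw c P)]%classic z -> z.2 = cw c P.
    move=> z [m [pk [lam [HF [Hs ->]]]]] /=.
    under eq_bigr => k _ do rewrite (HF k) /=.
    by rewrite -mulr_suml Hs mul1r.
  have := congr1 snd He; rewrite /= (aff2 _ Hu) (aff2 _ Hv) subrr => /eqP.
  by rewrite oner_eq0.
split=> //; split.
  have [y [Hy Hyo _]] := active_pot Hc Htf Hts HaP.
  exists y; split; first by apply/lp_feasE.
  move=> t'' y'' /lp_feasE Hf''.
  rewrite /lp_obj !b_sum Hyo.
  have := weak_walk Hf'' HaP.1; rewrite !tw_dot; lra.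
move=> w' t' Hw' HT.
have [y' [/lp_feasE [Ht' _] _]] := HT.
have [Q [HaQ _ Hle]] := key_bound Hc Htf Hw' HT.
apply: le_trans Hle _; rewrite -tw_dot; exact: Hbest.
Qed.
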